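(* Let $n\ge2$ and $a,b$ be positive integers, $h(j)=aj^n+b$ for $j\ge0$, $h(j)=0$ for $j<0$, $\alpha=a/b$ and $c(h)=\lfloor\alpha\rfloor+1$. Then $\operatorname{hdepth}(h)\le \operatorname{eq}(h)$. Moreover, if $c(h)\le 4$, then $\operatorname{hdepth}(h)=\operatorname{eq}(h)$.
   Context: For a nonzero function $h:\mathbb Z\to\mathbb Z_{\ge 0}$ with $h(j)=0$ for all sufficiently negative $j$, and integers $k\le d$, set $\beta_k^d(h)=\sum_{j\le k}(-1)^{k-j}\binom{d-j}{k-j}h(j)$, and $\operatorname{hdepth}(h)=\max\{d\in\mathbb Z:\ \beta_k^d(h)\ge 0\text{ for all integers }k\le d\}$. For $1\le i\le 2^n-1$ put $m=2^n+1-i$ and $\lambda_i=\dfrac{m^2+m(2^{n+1}-3)+2^{2n}-3\cdot2^n+4}{2m-2}$ (so $\lambda_1<\lambda_2<\dots<\lambda_{2^n-1}$). Define $$\operatorname{eq}(h)=\begin{cases}c(h),&\alpha\in(0,2^{n+1}-1),\\ 2^{n+1},&\alpha\in[2^{n+1}-1,\lambda_1],\\ 2^{n+1}+1-i,&\alpha\in(\lambda_{i-1},\lambda_i]\ \text{ for } 2\le i\le 2^n-1,\\ 2^n+1,&\alpha\in(\lambda_{2^n-1},\infty).\end{cases}$$ *)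

(* Defs.v *)
From mathcomp Require Import all_boot all_order all_algebra.
Set Implicit Arguments. Unset Strict Implicit. Unset Printing Implicit Defensive.
Import Order.TTheory GRing.Theory Num.Theory.
Local Open Scope ring_scope.

(* beta_k^d(h) = sum_{j <= k} (-1)^(k-j) C(d-j, k-j) h(j), for functions h
   vanishing on negative integers (so the sum runs over 0 <= j <= k; it is
   empty, i.e. 0, when k < 0).  Only meaningful for k <= d. *)
Definition beta (h : int -> int) (d k : int) : int :=
  if (0 <= k) then
    \sum_(i < `|(k + 1)%R|%N)
      (-1) ^+ `|(k - i%:Z)%R|%N * ('C(`|(d - i%:Z)%R|%N, `|(k - i%:Z)%R|%N))%:Z * h i%:Z
  else 0.

Definition hdepth_ok (h : int -> int) (d : int) : Prop :=
  forall k : int, k <= d -> 0 <= beta h d k.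

Definition is_hdepth (h : int -> int) (e : int) : Prop :=
  hdepth_ok h e /\ (forall d, hdepth_ok h d -> d <= e).

Definition hpoly (n a b : nat) (j : int) : int :=
  if 0 <= j then a%:Z * j ^+ n + b%:Z else 0.

Definition alpha (a b : nat) : rat := a%:R / b%:R.

Definition ch (a b : nat) : int := (a %/ b)%:Z + 1.

Definition lambda (n i : nat) : rat :=
  let m : rat := (2 ^ n + 1 - i)%N%:R in
  (m ^+ 2 + m * ((2 ^ n.+1)%N%:R - 3) + (2 ^ (2 * n))%N%:R
     - 3 * (2 ^ n)%N%:R + 4) / (2 * m - 2).

(* eq(h), following the case definition literally; in the third case i is
   the (first) index 2 <= i <= 2^n - 1 with lambda_{i-1} < alpha <= lambda_i. *)
Definition eqh (n a b : nat) : int :=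
  let al := alpha a b in
  if (0 < al) && (al < (2 ^ n.+1 - 1)%N%:R) then ch a b
  else if ((2 ^ n.+1 - 1)%N%:R <= al) && (al <= lambda n 1) then (2 ^ n.+1)%N%:Z
  else if lambda n (2 ^ n - 1) < al then (2 ^ n + 1)%N%:Z
  else
    let s := [seq i <- iota 2 (2 ^ n - 2)
               | (lambda n i.-1 < al) && (al <= lambda n i)] in
    (2 ^ n.+1 + 1)%N%:Z - (head 0%N s)%:Z.

(* Main.v *)
Require Import Defs.
From mathcomp Require Import all_boot all_order all_algebra.
From mathcomp Require Import zify ring.
Import Order.TTheory GRing.Theory Num.Theory.
Local Open Scope ring_scope.

Definition B (h : int -> int) (D K : nat) : int :=
  \sum_(i < K.+1) (-1) ^+ (K - i)%N * ('C(D - i, K - i))%:Z * h i%:Z.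

Lemma beta_B h (D K : nat) : (K <= D)%N -> beta h D%:Z K%:Z = B h D K.
Proof.
move=> KD; rewrite /beta /B (_ : (0 <= K%:Z) = true) //.
have -> : absz (K%:Z + 1)%R = K.+1 by rewrite -[1]/(1%N%:Z) -PoszD addn1.
apply: eq_bigr => i _.
have iK : (i <= K)%N by rewrite -ltnS ltn_ord.
by rewrite !distnEl // (leq_trans iK KD).
Qed.

Lemma B_pascal h (E K : nat) : (K.+1 <= E)%N ->
  B h E K.+1 = B h E.+1 K.+1 + B h E K.
Proof.
move=> KE; rewrite /B big_ord_recr [in X in _ = X + _]big_ord_recr /=.
rewrite !subnn !bin0 addrAC; congr (_ + _).
rewrite -big_split /=; apply: eq_bigr => i _.
have iK : (i <= K)%N by rewrite -ltnS ltn_ord.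
rewrite !subSn //; last by apply: leq_trans KE; apply: leq_trans iK _.
rewrite binS PoszD exprS !mulN1r mulrDr mulrDl mulNr.
by rewrite -[RHS]addrA !mulNr addNr addr0.
Qed.

Lemma ok_pred h d : hdepth_ok h d -> hdepth_ok h (d - 1).
Proof.
move=> H k kd.
case: (ltrP k 0) => [k0|k0].
  by rewrite /beta ifN // -ltNge.
case: k k0 kd => [K|K] // _ kd.
have [E dE] : exists E : nat, d = E.+1%:Z.
  exists `|d - 1|%N.
  have : 0 <= d - 1 by apply: le_trans kd.
  case: (d - 1) (subrK 1 d) => [m|m] // <- _.
  by rewrite -[1]/(1%N%:Z) -PoszD addn1.
subst d.
have -> : E.+1%:Z - 1 = E%:Z by lia.
have KE : (K <= E)%N.
  by move: kd; lia.
rewrite beta_B //.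
have H' : forall K, (K <= E.+1)%N -> 0 <= B h E.+1 K.
  by move=> K' K'E; rewrite -beta_B // H // lez_nat.
clear kd; elim: K KE => [|K IH] KE.
  move: (H' 0%N isT); rewrite /B !big_ord_recr !big_ord0 /=.
  by rewrite !subn0 !bin0.
rewrite B_pascal //; apply: addr_ge0; first by apply: H'; apply: leqW.
by apply: IH; apply: ltnW.
Qed.

Lemma ok_le h d d' : hdepth_ok h d -> d' <= d -> hdepth_ok h d'.
Proof.
move=> H dd.
have [m ->] : exists m : nat, d' = d - m%:Z.
  exists `|d - d'|%N; rewrite gez0_abs ?subr_ge0 //.
  by rewrite opprB addrC subrK.
elim: m => [|m IH]; first by rewrite subr0.
have -> : d - m.+1%:Z = (d - m%:Z) - 1.
  by rewrite -addn1 PoszD opprD addrA.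
exact: ok_pred.
Qed.

Lemma bin2_2 D : ('C(D, 2) * 2 = D * D.-1)%N.
Proof.
elim: D => [|D IH] //; rewrite binS bin1 mulnDl IH; case: D {IH} => //= D; lia.
Qed.

Lemma hpoly_nat n a b (i : nat) : hpoly n a b i%:Z = (a * i ^ n + b)%N%:Z.
Proof.
rewrite /hpoly (_ : (0 <= i%:Z) = true) // PoszD PoszM; congr (_ + _).
by congr (_ * _); rewrite -!natz natrX.
Qed.

Lemma beta1 n a b (D : nat) : (0 < n)%N -> (1 <= D)%N ->
  beta (hpoly n a b) D%:Z 1 = (a + b)%N%:Z - (D * b)%N%:Z.
Proof.
move=> n0 D1; rewrite (beta_B _ D 1) // /B !big_ord_recr big_ord0 /=.
rewrite !hpoly_nat !subn0 subnn bin0 bin1 exp1n exp0n // muln1 muln0 add0n expr1 expr0.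
lia.
Qed.

Lemma beta2 n a b (D : nat) : (0 < n)%N -> (2 <= D)%N ->
  2 * beta (hpoly n a b) D%:Z 2 =
  (2 * (a * 2 ^ n + b) + D * D.-1 * b)%N%:Z - (2 * D.-1 * (a + b))%N%:Z.
Proof.
move=> n0 D2; rewrite (beta_B _ D 2) // /B !big_ord_recr big_ord0 /=.
rewrite !hpoly_nat !subn0 subnn bin0 exp1n exp0n // muln1 muln0 add0n.
rewrite subn1 bin1 expr0 expr1 /= (_ : (-1) ^+ 2 = 1 :> int) //.
have := congr1 (muln^~ b) (bin2_2 D); rewrite /= -subn1.
nia.
Qed.

Definition Lnum (N M : nat) : int :=
  M%:Z * M%:Z + M%:Z * (2 * N%:Z - 3) + N%:Z * N%:Z - 3 * N%:Z + 4.

Lemma lambda_eq n i :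
  lambda n i = (Lnum (2 ^ n) (2 ^ n + 1 - i))%:~R / (2 * (2 ^ n + 1 - i)%N%:Z - 2)%:~R.
Proof.
have E : (2 ^ (2 * n) = 2 ^ n * 2 ^ n)%N by rewrite mul2n -addnn expnD.
rewrite /lambda /Lnum expnS E.
set N := (2 ^ n)%N; set M := (N + 1 - i)%N.
rewrite !natrM.
congr (_ / _); ring.
Qed.

Lemma rlt (x y p q : int) : 0 < q -> 0 < y ->
  (p%:~R / q%:~R < x%:~R / y%:~R :> rat) = (p * y < x * q).
Proof.
move=> q0 y0.
by rewrite ltr_pdivrMr ?ltr0z // mulrAC ltr_pdivlMr ?ltr0z // -!intrM ltr_int.
Qed.

Lemma rle (x y p q : int) : 0 < q -> 0 < y ->
  (p%:~R / q%:~R <= x%:~R / y%:~R :> rat) = (p * y <= x * q).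
Proof.
move=> q0 y0.
by rewrite ler_pdivrMr ?ltr0z // mulrAC ler_pdivlMr ?ltr0z // -!intrM ler_int.
Qed.

Lemma alphaE a b : alpha a b = (a%:Z)%:~R / (b%:Z)%:~R.
Proof. by []. Qed.

Lemma natr_frac (m : nat) : (m%:R : rat) = (m%:Z)%:~R / (1%:Z)%:~R.
Proof. by rewrite divr1. Qed.

Lemma bad_ok h D k : hdepth_ok h D%:Z -> (k <= D)%N -> beta h D%:Z k%:Z < 0 -> False.
Proof.
move=> H kD; have := H k%:Z; rewrite lez_nat => /(_ kD).
by rewrite leNgt => /negP.
Qed.

Lemma part1 n a b (hn : (2 <= n)%N) (ha : (0 < a)%N) (hb : (0 < b)%N) d :
  hdepth_ok (hpoly n a b) d -> d <= eqh n a b.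
Proof.
move=> H; rewrite leNgt; apply/negP => lt.
have n0 : (0 < n)%N by apply: leq_trans hn.
have N4 : (4 <= 2 ^ n)%N.
  by rewrite -[4%N]/(2 ^ 2)%N leq_exp2l.
have N2 : (2 ^ n.+1 = 2 * 2 ^ n)%N by rewrite expnS.
have okD : forall D : nat, eqh n a b + 1 = D%:Z -> hdepth_ok (hpoly n a b) D%:Z.
  move=> D <-; apply: ok_le H _; lia.
have B1 : forall D : nat, eqh n a b + 1 = D%:Z -> (1 <= D)%N -> (D * b > a + b)%N -> False.
  move=> D eD D1 lt1; apply: (bad_ok _ _ _ (okD D eD) D1).
  rewrite beta1 //; lia.
have B2 : forall D : nat, eqh n a b + 1 = D%:Z -> (2 <= D)%N ->
    (2 * (a * 2 ^ n + b) + D * D.-1 * b < 2 * D.-1 * (a + b))%N -> False.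
  move=> D eD D2 lt2; apply: (bad_ok _ _ _ (okD D eD) D2).
  have := beta2 n a b D n0 D2.
  move: lt2; set X := (2 * (a * 2 ^ n + b) + D * D.-1 * b)%N.
  set Y := (2 * D.-1 * (a + b))%N; move: (beta _ _ _) => z.
  lia.
move: B1 B2; rewrite /eqh.
set N := (2 ^ n)%N in N4 N2 *.
case: ifP => C1.
  move=> B1 _; apply: (B1 (a %/ b).+2); rewrite /ch; first lia.
    by [].
  have := divn_eq a b; have := ltn_pmod a hb; nia.
case: ifP => C2.
  move=> B1 B2.
  have [lt1|ge1] := ltnP a (2 * N * b).
    apply: (B1 (2 * N).+1); rewrite ?N2; [lia|lia|nia].
  apply: (B2 (2 * N).+1); rewrite ?N2; [lia|lia|].
  rewrite /=; nia.
have l1 : (N + 1 - 1 = N)%N by lia.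
have lamE : forall i, lambda n i = (Lnum N (N + 1 - i))%:~R / (2 * (N + 1 - i)%N%:Z - 2)%:~R.
  by move=> i; rewrite lambda_eq.
case: ifP => C3.
  move=> _ B2; apply: (B2 (N + 2)); [lia|lia|].
  move: C3; rewrite lamE alphaE rlt; last by lia.
  2: lia.
  have -> : (N + 1 - (N - 1) = 2)%N by lia.
  rewrite /Lnum /=; move=> h; nia.
move=> _ B2.
have a0 : 0 < alpha a b by rewrite /alpha divr_gt0 // ltr0n.
rewrite a0 /= in C1.
have ge : (2 ^ n.+1 - 1)%:R <= alpha a b by rewrite leNgt C1.
rewrite ge /= in C2.
have hl1 : lambda n 1 < alpha a b by rewrite ltNge C2.
have hlN : alpha a b <= lambda n (N - 1) by rewrite leNgt C3.
move: B2; set s := filter _ (iota _ _) => B2.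
have [j js] : exists j, j \in s.
  have exQ : exists i, (1 < i)%N && (alpha a b <= lambda n i).
    by exists (N - 1)%N; rewrite hlN andbT; lia.
  case: (ex_minnP exQ) => i /andP[i1 ali] imin.
  exists i; rewrite mem_filter ali andbT mem_iota.
  have iN : (i <= N - 1)%N by apply: imin; rewrite hlN andbT; lia.
  apply/andP; split; last lia.
  case: (ltnP 1 i.-1) => ii.
    rewrite ltNge; apply/negP => h.
    have := imin i.-1; rewrite ii h => /(_ isT); lia.
  by have -> : i.-1 = 1%N by lia.
have hh : forall t : seq nat, j \in t -> head 0%N t \in t by case=> // x t _; exact: mem_head.
have := hh s js.
set i := head 0%N s in B2 *.
rewrite mem_filter mem_iota => /andP[/andP[li _] ri].
apply: (B2 (2 * N + 2 - i)%N); [rewrite N2; lia|lia|].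
move: li; rewrite lamE alphaE rlt; last by lia.
2: lia.
have -> : (N + 1 - i.-1 = N + 2 - i)%N by lia.
rewrite /Lnum /=; move=> h.
have [M' eM] : exists M', (N + 2 - i = M'.+1)%N by exists (N + 1 - i)%N; lia.
have -> : ((2 * N + 2 - i).-1 = N + M')%N by lia.
have -> : ((2 * N + 2 - i) = (N + M').+1)%N by lia.
rewrite eM in h; clear -h.
rewrite -ltz_nat -subr_gt0.
rewrite (_ : _ - _ = a%:Z * (2 * M'.+1%:Z - 2) - (M'.+1%:Z * M'.+1%:Z + M'.+1%:Z * (2 * N%:Z - 3) + N%:Z * N%:Z - 3 * N%:Z + 4) * b%:Z).
  by rewrite subr_gt0.
rewrite -[M'.+1]addn1 -[(N + M').+1]addn1 !(PoszD, PoszM); ring.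
Qed.
Lemma pow32 n : (2 <= n)%N -> (2 * 2 ^ n <= 3 ^ n)%N.
Proof.
elim: n => [|n IH] //; case: n IH => [|[|n]] // IH _.
rewrite !(expnS _ n.+2); move: IH => /(_ isT); lia.
Qed.

Lemma okc n a b (hn : (2 <= n)%N) (ha : (0 < a)%N) (hb : (0 < b)%N) :
  ch a b <= 4 -> hdepth_ok (hpoly n a b) (ch a b).
Proof.
move=> c4 k kc.
have n0 : (0 < n)%N by apply: leq_trans hn.
have F1 : (4 * a <= a * 2 ^ n)%N.
  by rewrite mulnC leq_mul2l (_ : 4 = 2 ^ 2)%N // leq_exp2l // hn orbT.
have F2 : (2 * (a * 2 ^ n) <= a * 3 ^ n)%N.
  by rewrite mulnCA leq_mul2l pow32 // orbT.
have F3 : (a * 3 ^ n <= a * 4 ^ n)%N.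
  by rewrite leq_mul2l leq_exp2r // orbT.
have qb := divn_eq a b; have qb2 := ltn_pmod a hb.
move: c4 kc; rewrite /ch; move: (a %/ b)%N qb => q qb c4 kc.
case: k kc => [K|K] kc; last by rewrite /beta.
have -> : q%:Z + 1 = q.+1%:Z by lia.
rewrite beta_B; last by lia.
have q3 : (q <= 3)%N by lia.
have KD : (K <= q.+1)%N by lia.
case: q q3 qb c4 kc KD => [|[|[|[|q]]]] // _ qb _ _ KD;
  case: K KD => [|[|[|[|[|K]]]]] // _;
  rewrite /B !big_ord_recr big_ord0 /= !hpoly_nat exp0n // exp1n muln1 muln0 ?add0n;
  rewrite ?subSS ?subn0 ?binS ?bin0 ?bin0n ?subnn ?expr0 ?exprS ?expr0; lia.
Qed.

Theorem theorem3p9 (n a b : nat) (hn : (2 <= n)%N) (ha : (0 < a)%N) (hb : (0 < b)%N) :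
  (forall d : int, hdepth_ok (hpoly n a b) d -> d <= eqh n a b) /\
  (ch a b <= 4 -> is_hdepth (hpoly n a b) (eqh n a b)).
Proof.
split; first exact: part1.
move=> c4.
have E : eqh n a b = ch a b.
  rewrite /eqh ifT //; apply/andP; split.
    by rewrite /alpha divr_gt0 // ltr0n.
  rewrite alphaE natr_frac rlt //.
  have N8 : (8 <= 2 ^ n.+1)%N.
    by rewrite (_ : 8 = 2 ^ 3)%N // leq_exp2l.
  have qb := divn_eq a b; have qb2 := ltn_pmod a hb.
  move: c4; rewrite /ch; move: (a %/ b)%N qb => q qb c4.
  nia.
rewrite E; split; first exact: okc.
by move=> d; rewrite -E; exact: part1.
Qed.
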